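(* Let $T$ be a balanced tree. If $T$ has two leaves $l_1,l_2$ with $\mathrm{dist}(l_1,l_2)=4$, then $T$ is mixed.
   Context: A leaf is a vertex of degree 1; the height of a vertex is its minimum distance to a leaf; a tree is balanced if no two adjacent vertices have the same height. With $N(D)=\bigcup_{v\in D}\{u:uv\in E\}$, a TD-set is $D$ with $N(D)=V$, minimal if no proper subset is a TD-set. $T$ is unmixed if all minimal TD-sets have the same size, and mixed otherwise. *)

(* Defs.v *)
From mathcomp Require Import all_boot.
Set Implicit Arguments. Unset Strict Implicit. Unset Printing Implicit Defensive.

Section Graphs.
Variables (T : finType) (e : rel T).

Definition simple_graph : Prop := symmetric e /\ irreflexive e.

Definition has_cycle : Prop :=
  exists c : seq T, [/\ 3 <= size c, uniq c & cycle e c].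

Definition connected_graph : Prop := forall x y : T, connect e x y.

Definition is_tree : Prop := [/\ simple_graph, connected_graph & ~ has_cycle].

Definition nbhd (v : T) : {set T} := [set u | e v u].
Definition leaf (v : T) : bool := #|nbhd v| == 1.

Definition is_dist (x y : T) (d : nat) : Prop :=
  (exists p : seq T, [/\ path e x p, last x p = y & size p = d]) /\
  (forall p : seq T, path e x p -> last x p = y -> d <= size p).

Definition is_height (v : T) (h : nat) : Prop :=
  (exists l, leaf l /\ is_dist v l h) /\
  (forall l d, leaf l -> is_dist v l d -> h <= d).

Definition balanced : Prop :=
  forall u v h, e u v -> is_height u h -> ~ is_height v h.

Definition NS (D : {set T}) : {set T} := \bigcup_(v in D) nbhd v.
Definition TDset (D : {set T}) : bool := NS D == [set: T].
Definition minimal_TDset (D : {set T}) : Prop :=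
  TDset D /\ (forall D' : {set T}, D' \proper D -> ~ TDset D').

Definition unmixed : Prop :=
  forall D1 D2 : {set T}, minimal_TDset D1 -> minimal_TDset D2 -> #|D1| = #|D2|.
Definition mixed : Prop := ~ unmixed.

End Graphs.

(* Main.v *)
Require Import Defs.
From mathcomp Require Import all_boot.

Lemma leaf_uniq {T : finType} {e : rel T} {l x y} :
  leaf e l -> e l x -> e l y -> x = y.
Proof.
move=> /cards1P [z Hz] Hx Hy.
have : x \in nbhd e l by rewrite inE.
have : y \in nbhd e l by rewrite inE.
by rewrite Hz !inE => /eqP -> /eqP ->.
Qed.

Lemma not_leaf2 {T : finType} (e : rel T) x y z :
  e x y -> e x z -> y != z -> ~~ leaf e x.
Proof. by move=> Hy Hz nyz; apply/negP => lx; rewrite (leaf_uniq lx Hy Hz) eqxx in nyz. Qed.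

Lemma height1 {T : finType} (e : rel T) x l :
  ~~ leaf e x -> leaf e l -> e x l -> is_height e x 1.
Proof.
move=> nlx ll exl; split.
  exists l; split => //; split.
    by exists [:: l]; rewrite /= exl.
  by case=> [|y p] //= _ Hl; rewrite Hl ll in nlx.
move=> l' [|d] // ll' [[p [Hp Hl Hs]] _].
by case: p Hp Hl Hs => //= _ Hl _; rewrite Hl ll' in nlx.
Qed.

Lemma exists_min {T : finType} (e : rel T) (S : {set T}) :
  TDset e S -> exists M, minimal_TDset e M /\ M \subset S.
Proof.
move=> HS.
have ex : exists n, [exists D : {set T}, [&& D \subset S, TDset e D & #|D| == n]].
  by exists #|S|; apply/existsP; exists S; rewrite subxx HS eqxx.
case: (ex_minnP ex) => n /existsP [M /and3P [MS MT /eqP Mn]] Hmin.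
exists M; split => //; split => // D' DM D'T.
have : n <= #|D'|.
  apply: Hmin; apply/existsP; exists D'.
  by rewrite (subset_trans (proper_sub DM) MS) D'T eqxx.
by rewrite -Mn leqNgt (proper_card DM).
Qed.

Lemma inNS {T : finType} (e : rel T) (D : {set T}) x :
  (x \in NS e D) = [exists w, (w \in D) && e w x].
Proof.
apply/bigcupP/existsP => [[w wD]|[w /andP [wD H]]].
  by rewrite inE => H; exists w; rewrite wD H.
by exists w; rewrite // inE.
Qed.

Theorem theorem3p29 (T : finType) (e : rel T) :
  is_tree e -> balanced e ->
  forall l1 l2 : T, leaf e l1 -> leaf e l2 -> is_dist e l1 l2 4 ->
  mixed e.
Proof.
case=> [[esym eirr] econn nocyc] bal l1 l2 ll1 ll2 [[p [Hp Hl Hs]] Hmin] unm.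
have ee : forall x y, e x y = e y x by move=> x y; apply: esym.
have ei : forall x, e x x = false by move=> x; apply: eirr.
case: p Hp Hl Hs => [|a [|b [|c [|d [|? ?]]]]] //= Hp Hl _.
subst d.
case/and5P: Hp => e1a eab ebc ec2 _.
have nac : ~~ e a c.
  by apply/negP => H; have := Hmin [:: a; c; l2]; rewrite /= e1a H ec2 => /(_ isT erefl).
have n1c : ~~ e l1 c.
  by apply/negP => H; have := Hmin [:: c; l2]; rewrite /= H ec2 => /(_ isT erefl).
have na2 : ~~ e a l2.
  by apply/negP => H; have := Hmin [:: a; l2]; rewrite /= e1a H => /(_ isT erefl).
have n12 : l1 != l2.
  by apply/eqP => H; have := Hmin [::]; rewrite /= => /(_ isT H).
have nac' : a != c by apply/eqP => H; rewrite H ec2 in na2.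
set X := (nbhd e a :\ l1) :|: (nbhd e c :\ l2).
have inX : forall w, (w \in X) = ((w != l1) && e a w) || ((w != l2) && e c w).
  by move=> w; rewrite !inE.
have hn : forall x, ~~ leaf e x -> forall l, leaf e l -> e x l -> is_height e x 1.
  by move=> x nx l ll H; exact: (@height1 T e x l nx ll H).
have TDX : TDset e (~: X).
  apply/eqP/setP => v; rewrite inE inNS.
  have [->|nva] := eqVneq v a.
    apply/existsP; exists l1; rewrite inE inX eqxx /= e1a andbT.
    have -> : e c l1 = false by rewrite ee (negbTE n1c).
    by rewrite andbF.
  have [->|nvc] := eqVneq v c.
    apply/existsP; exists l2; rewrite inE inX eqxx /= orbF (ee l2 c) ec2 andbT.
    by rewrite (negbTE na2) andbF.
  case: (boolP [exists w, (w \in ~: X) && e w v]) => // /negP HX0; exfalso.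
  have HX' : forall w, e v w -> w \in X.
    move=> w H; apply/negPn/negP => nw; apply: HX0; apply/existsP; exists w.
    by rewrite inE nw ee H.
  have [u evu] : exists u, e v u.
    move: (econn v a) => /connectP [[|u q] /= Hq Hlast].
      by rewrite Hlast eqxx in nva.
    by exists u; case/andP: Hq.
  have nvb : v != b.
    apply/eqP => E; have := HX' a; rewrite E (ee b a) eab => /(_ isT).
    by rewrite inX ei (ee c a) (negbTE nac) !andbF.
  case: (boolP (leaf e v)) => lv.
    have := HX' u evu; rewrite inX => /orP [/andP [nu1 eau]|/andP [nu2 ecu]].
      have h1 : is_height e u 1.
        apply: (hn u _ v lv); last by rewrite ee.
        by apply: (@not_leaf2 T e u v a); rewrite // ee.
      have h2 : is_height e a 1.
        apply: (hn a _ l1 ll1); last by rewrite ee.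
        by apply: (@not_leaf2 T e a l1 u); rewrite // 1?ee // eq_sym.
      by apply: (bal u a 1 _ h1 h2); rewrite ee.
    have h1 : is_height e u 1.
      apply: (hn u _ v lv); last by rewrite ee.
      by apply: (@not_leaf2 T e u v c); rewrite // ee.
    have h2 : is_height e c 1.
      apply: (hn c _ l2 ll2) => //.
      by apply: (@not_leaf2 T e c l2 u); rewrite // eq_sym.
    by apply: (bal u c 1 _ h1 h2); rewrite ee.
  have [u' evu' nuu'] : exists2 u', e v u' & u' != u.
    case: (boolP (nbhd e v :\ u == set0)) => [|/set0Pn [u' ]]; last first.
      by rewrite !inE => /andP [H1 H2]; exists u'.
    rewrite setD_eq0 => sub.
    have : nbhd e v = [set u].
      apply/eqP; rewrite eqEsubset sub sub1set inE evu //.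
    by move=> H; rewrite /leaf H cards1 eqxx in lv.
  have nE : forall x y, e x y -> x != y by move=> x y H; apply/eqP => E; rewrite E ei in H.
  have nE' : forall x y, e x y -> y != x by move=> x y H; rewrite eq_sym nE.
  have same : forall z x y, z != v -> x != y -> e v x -> e v y -> e z x -> e z y -> False.
    move=> z x y nzv nxy evx evy ezx ezy; apply: nocyc; exists [:: z; x; v; y].
    rewrite /= !inE !negb_or; split => //.
      by rewrite (nE _ _ ezx) nzv (nE _ _ ezy) (nE' _ _ evx) nxy (nE _ _ evy).
    by rewrite ezx (ee x v) evx evy (ee y z) ezy.
  have cross : forall x y, x != y -> e v x -> e v y -> e a x -> e c y ->
      ~~ e c x -> ~~ e a y -> False.
    move=> x y nxy evx evy eax ecy ncx nay; apply: nocyc; exists [:: a; x; v; y; c; b].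
    have nay' : a != y.
      by apply/eqP => E; move: ecy; rewrite -E (ee c a) (negbTE nac).
    have nxc : x != c.
      by apply/eqP => E; move: eax; rewrite E (negbTE nac).
    have nxb : x != b.
      by apply/eqP => E; move: ncx; rewrite E (ee c b) ebc.
    have nyb : y != b.
      by apply/eqP => E; move: nay; rewrite E eab.
    rewrite /= !inE !negb_or; split => //.
      rewrite (nE _ _ eax) (eq_sym a v) nva nay' nac' (nE _ _ eab).
      rewrite (nE' _ _ evx) nxy nxc nxb (nE _ _ evy) nvc nvb.
      by rewrite (nE' _ _ ecy) nyb (nE' _ _ ebc).
    by rewrite eax (ee x v) evx evy (ee y c) ecy (ee c b) ebc (ee b a) eab.
  have key : forall x y, x != y -> e v x -> e v y ->
      (e a x || e c x) -> (e a y || e c y) -> False.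
    move=> x y nxy evx evy /orP [ax|cx] /orP [ay|cy].
    - by apply: (same a x y); rewrite // eq_sym.
    - case: (boolP (e c x)) => [cx|ncx]; first by apply: (same c x y); rewrite // eq_sym.
      case: (boolP (e a y)) => [ay|nay]; first by apply: (same a x y); rewrite // eq_sym.
      exact: (cross x y).
    - case: (boolP (e a x)) => [ax|nax]; first by apply: (same a x y); rewrite // eq_sym.
      case: (boolP (e c y)) => [cy|ncy]; first by apply: (same c x y); rewrite // eq_sym.
      by apply: (cross y x); rewrite // eq_sym.
    - by apply: (same c x y); rewrite // eq_sym.
  have toac : forall w, w \in X -> e a w || e c w.
    by move=> w; rewrite inX => /orP [/andP [_ ->]|/andP [_ ->]] //; rewrite orbT.
  exact: (key u' u nuu' evu' evu (toac _ (HX' _ evu')) (toac _ (HX' _ evu))).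
have [Q [[QT QM] QS]] := exists_min e _ TDX.
have l1Q : l1 \in Q.
  have : a \in NS e Q by rewrite (eqP QT) inE.
  rewrite inNS => /existsP [w /andP [wQ ewa]].
  have := subsetP QS w wQ; rewrite inE inX (ee a w) ewa andbT.
  by case: (eqVneq w l1) => [<-|_].
have l2Q : l2 \in Q.
  have : c \in NS e Q by rewrite (eqP QT) inE.
  rewrite inNS => /existsP [w /andP [wQ ewc]].
  have := subsetP QS w wQ; rewrite inE inX (ee c w) ewc andbT.
  by case: (eqVneq w l2) => [<-|_]; rewrite ?orbT.
have nb1 : b != l1 by apply/eqP => E; move: ebc; rewrite E (negbTE n1c).
have bQ : b \notin Q.
  apply/negP => /(subsetP QS); rewrite inE inX nb1 eab.
  done.
set P := b |: (Q :\ l1 :\ l2).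
have TDP : TDset e P.
  apply/eqP/setP => x; rewrite inE inNS.
  have : x \in NS e Q by rewrite (eqP QT) inE.
  rewrite inNS => /existsP [w /andP [wQ ewx]].
  apply/existsP.
  have [E1|n1] := eqVneq w l1.
    rewrite E1 in ewx; have -> := leaf_uniq ll1 ewx e1a.
    by exists b; rewrite setU11 (ee b a) eab.
  have [E2|n2] := eqVneq w l2.
    rewrite E2 in ewx; have -> := leaf_uniq ll2 ewx (etrans (ee l2 c) ec2).
    by exists b; rewrite setU11 ebc.
  by exists w; rewrite !inE n1 n2 wQ ewx orbT.
have cardP : #|P| < #|Q|.
  have h1 := cardsD1 l1 Q.
  have h2 := cardsD1 l2 (Q :\ l1).
  have h3 := cardsU1 b (Q :\ l1 :\ l2).
  have l2Q' : l2 \in Q :\ l1 by rewrite !inE eq_sym n12 l2Q.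
  rewrite l1Q in h1; rewrite l2Q' in h2.
  have h4 : #|P| <= 1 + #|Q :\ l1 :\ l2| by rewrite h3 leq_add2r leq_b1.
  rewrite h1 h2; rewrite add1n in h4; rewrite !add1n ltnS (leq_trans h4) //.
have [M [MM MP]] := exists_min e _ TDP.
have := unm Q M (conj QT QM) MM.
have := subset_leq_card MP.
move=> h1 h2; rewrite -h2 in h1.
by move: (leq_ltn_trans h1 cardP); rewrite ltnn.
Qed.
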